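(* Let $k \ge 1$ and $m \ge 1$, and define \[ a(n) = \begin{cases} \frac14\binom{n+2}{3}, & n \text{ even},\\ \frac{1}{24}(n-1)(n+1)(n+3), & n \text{ odd}\end{cases} \] (the number of odd biGrassmannian permutations of $[n]$). Then the number of odd biGrassmannian permutations of $[m]$ that avoid $\operatorname{id}_k=12\cdots k$ equals $a(m)$ if $m \le k$; equals $a(2k-m)$ if $k < m < 2k$ and $m-k$ is even; equals $a(2k-m-2)$ if $k < m < 2k$ and $m-k$ is odd; and equals $0$ if $m \ge 2k$.
   Context: A permutation is Grassmannian if it has at most one descent; it is biGrassmannian if both it and its inverse are Grassmannian; it is odd if it has an odd number of inversions. A permutation avoids $12\cdots k$ if it has no increasing subsequence of length $k$. *)

(* Defs.v *)
(* Permutations of [m] = {1..m} are modelled as 'S_m,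
   permutations of 'I_m = {0..m-1}, compared via their nat values. *)
From mathcomp Require Import all_boot all_order all_fingroup.
Set Implicit Arguments. Unset Strict Implicit. Unset Printing Implicit Defensive.

Definition is_descent (m : nat) (s : 'S_m) (i : 'I_m) : bool :=
  [exists j : 'I_m, (nat_of_ord j == i.+1) && (s j < s i)].

Definition ndescents (m : nat) (s : 'S_m) : nat :=
  #|[set i : 'I_m | is_descent s i]|.

Definition grassmannian (m : nat) (s : 'S_m) : bool := ndescents s <= 1.

Definition bigrassmannian (m : nat) (s : 'S_m) : bool :=
  grassmannian s && grassmannian (s^-1)%g.

Definition ninv (m : nat) (s : 'S_m) : nat :=
  #|[set p : 'I_m * 'I_m | (p.1 < p.2) && (s p.2 < s p.1)]|.

Definition odd_perm_inv (m : nat) (s : 'S_m) : bool := odd (ninv s).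

Definition contains_id (k m : nat) (s : 'S_m) : bool :=
  [exists f : {ffun 'I_k -> 'I_m},
     [forall i : 'I_k, forall j : 'I_k,
        (i < j) ==> ((f i < f j) && (s (f i) < s (f j)))]].

Definition avoids_id (k m : nat) (s : 'S_m) : bool := ~~ contains_id k s.

(* a(n): exact nat division (the quotients are integers). *)
Definition a_seq (n : nat) : nat :=
  if odd n then ((n - 1) * (n + 1) * (n + 3)) %/ 24
  else 'C(n + 2, 3) %/ 4.

(* Main.v *)
Require Import Defs.
From mathcomp Require Import all_boot all_order all_fingroup.
From mathcomp Require Import zify.
Set Implicit Arguments. Unset Strict Implicit. Unset Printing Implicit Defensive.


Section Sym.
#[local] Set Default Proof Using "All".
Variables (m d e : nat) (f g : nat -> nat).
Hypotheses (fB : forall i, i < m -> f i < m) (gB : forall i, i < m -> g i < m).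
Hypotheses (fg : forall v, v < m -> f (g v) = v) (gf : forall i, i < m -> g (f i) = i).
Hypothesis fI : forall i j, i < j -> j < m -> (j <= d) || (d < i) -> f i < f j.
Hypothesis gI : forall i j, i < j -> j < m -> (j <= e) || (e < i) -> g i < g j.
Hypothesis fD : d.+1 < m /\ f d.+1 < f d.
Hypothesis gD : e.+1 < m /\ g e.+1 < g e.

Lemma monoK (h : nat -> nat) (x : nat)
  (hI : forall i j, i < j -> j < m -> (j <= x) || (x < i) -> h i < h j) :
  forall k i, i + k < m -> (i + k <= x) || (x < i) -> h i + k <= h (i + k).
Proof.
elim=> [|k IH] i Hm Hc; first by rewrite !addn0.
have H1 := IH i ltac:(lia) ltac:(lia).
have H2 := hI (i + k) (i + k.+1) ltac:(lia) Hm ltac:(lia).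
lia.
Qed.

Lemma mono (h : nat -> nat) (x : nat)
  (hI : forall i j, i < j -> j < m -> (j <= x) || (x < i) -> h i < h j) :
  forall i j, i <= j -> j < m -> (j <= x) || (x < i) -> h i + (j - i) <= h j.
Proof.
move=> i j Hij Hm Hc; have := @monoK h x hI (j - i) i ltac:(lia) ltac:(lia).
by rewrite subnKC.
Qed.

Lemma geF i : i <= d -> i <= f i.
Proof. move=> H; have := mono fI (i:=0) (j:=i) ltac:(lia) ltac:(lia) ltac:(lia); lia. Qed.

Lemma leF i : d < i -> i < m -> f i <= i.
Proof.
move=> H Hm; have := mono fI (i:=i) (j:=m.-1) ltac:(lia) ltac:(lia) ltac:(lia).
have := fB (i:=m.-1) ltac:(lia); have : m.-1 = m - 1 by lia. move=> ->; lia.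
Qed.

Lemma geG v : v <= e -> v <= g v.
Proof. move=> H; have := mono gI (i:=0) (j:=v) ltac:(lia) ltac:(lia) ltac:(lia); lia. Qed.

Lemma leG v : e < v -> v < m -> g v <= v.
Proof.
move=> H Hm; have := mono gI (i:=v) (j:=m.-1) ltac:(lia) ltac:(lia) ltac:(lia).
have := gB (i:=m.-1) ltac:(lia); lia.
Qed.

Lemma fix1 i : i < m -> i <= d -> f i <= e -> f i = i.
Proof.
move=> Hm H1 H2; have := geF H1; have := geG H2; rewrite gf //; lia.
Qed.

Lemma fix2 i : i < m -> d < i -> e < f i -> f i = i.
Proof.
move=> Hm H1 H2; have := leF H1 Hm; have := leG H2 (fB Hm); rewrite gf //; lia.
Qed.

Lemma finj i j : i < m -> j < m -> f i = f j -> i = j.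
Proof. by move=> Hi Hj E; rewrite -(gf Hi) -(gf Hj) E. Qed.

Lemma S1 : f d.+1 <= e.
Proof.
case: fD => Hm Hd.
case: (leqP (f d.+1) e) => // H.
have E := fix2 Hm (ltnSn d) H.
have := gI (i := d.+1) (j := f d) ltac:(lia) (fB (i:=d) ltac:(lia)) ltac:(lia).
rewrite -{1}E !gf //; lia.
Qed.

Lemma S2 v : v < f d.+1 -> f v = v.
Proof.
case: fD => Hm Hd => Hv.
have He := S1.
have Hvm : v < m by have := fB Hm; lia.
have := gI (i := v) (j := f d.+1) Hv (fB Hm) ltac:(lia).
rewrite gf // => Hg.
have := fix1 (i := g v) (gB Hvm) ltac:(lia); rewrite fg //; move=> /(_ ltac:(lia)) E.
by rewrite {1}E fg.
Qed.

Lemma S2' : f d.+1 <= d.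
Proof.
case: fD => Hm Hd.
have := leF (i := d.+1) (ltnSn d) Hm.
case: (leqP (f d.+1) d) => // H1 H2.
have E : f d.+1 = d.+1 by lia.
have := S2 (v := d); rewrite E => /(_ (ltnSn d)) E2. lia.
Qed.

End Sym.

Definition Pn (a b c i : nat) :=
  if i < a then i else if i < a + b then i + c else if i < a + b + c then i - b else i.

Section Main.
Variables (m d e : nat) (f g : nat -> nat).
Hypotheses (fB : forall i, i < m -> f i < m) (gB : forall i, i < m -> g i < m).
Hypotheses (fg : forall v, v < m -> f (g v) = v) (gf : forall i, i < m -> g (f i) = i).
Hypothesis fI : forall i j, i < j -> j < m -> (j <= d) || (d < i) -> f i < f j.
Hypothesis gI : forall i j, i < j -> j < m -> (j <= e) || (e < i) -> g i < g j.
Hypothesis fD : d.+1 < m /\ f d.+1 < f d.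
Hypothesis gD : e.+1 < m /\ g e.+1 < g e.

Let a := f d.+1.
Let Ha1 : a <= e := S1 fB gB fg gf fI gI fD gD.
Let Ha2 : a <= d := S2' fB gB fg gf fI gI fD gD.
Let Hg1 : g e.+1 <= d := S1 gB fB gf fg gI fI gD fD.
Let monoh := mono fB gB fg gf fI gI fD gD.
Let fix1h := fix1 fB gB fg gf fI gI fD gD.
Let fix2h := fix2 fB gB fg gf fI gI fD gD.
Let S2h := S2 fB gB fg gf fI gI fD gD.
Let Hm : d.+1 < m := proj1 fD.
Let Hem : e.+1 < m := proj1 gD.
Ltac ctx := have Hm0 := Hm; have Hem0 := Hem; have Ha10 := Ha1; have Ha20 := Ha2; have Hg10 := Hg1; have Had : a = f d.+1 by [].

Lemma S3 i : a <= i -> i <= d -> e < f i.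
Proof.
ctx.
move=> H1 H2; case: (leqP (f i) e) => // H.
have E := fix1h (i := i) ltac:(lia) H2 H.
have := monoh gI (i := a) (j := i) H1 ltac:(lia) ltac:(lia).
rewrite -{2}E !gf //; lia.
Qed.

Lemma S4 i : a <= i -> i.+1 <= d -> f i.+1 = (f i).+1.
Proof.
ctx.
move=> H1 H2.
have Hi := fI (i := i) (j := i.+1) (ltnSn i) ltac:(lia) ltac:(lia).
have Hfm := fB (i := i.+1) ltac:(lia).
have He := S3 H1 ltac:(lia).
pose w := (f i).+1; have Hwdef : w = (f i).+1 by [].
have Hw : w < m by rewrite /w; lia.
case: (leqP (g w) d) => Hj.
- case: (leqP (g w) i) => Hji.
  + have := monoh fI (i := g w) (j := i) Hji ltac:(lia) ltac:(lia).
    rewrite fg //; rewrite /w; lia.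
  + have := monoh fI (i := i.+1) (j := g w) Hji ltac:(lia) ltac:(lia).
    rewrite fg //; rewrite /w; lia.
- have E := fix2h (i := g w) (gB Hw) Hj ltac:(rewrite fg //; rewrite /w; lia).
  rewrite fg // in E.
  case: (ltngtP (f i.+1) w) => H3; first by rewrite /w in H3; lia.
  + have := gI (i := w) (j := f i.+1) H3 (fB (i := i.+1) ltac:(lia)) ltac:(rewrite /w; lia).
    rewrite gf //; lia.
  + by [].
Qed.

Lemma S5 : f a = e.+1.
Proof.
ctx.
set p := g e.+1.
have Hp : p < m := gB Hem.
have Hfp : f p = e.+1 by rewrite /p fg.
case: (ltnP p a) => Hpa.
  have := S2h Hpa; rewrite Hfp; lia.
have := monoh fI (i := a) (j := p) Hpa Hp ltac:(rewrite /p; lia).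
have := S3 (i := a) (leqnn a) Ha2. rewrite Hfp; lia.
Qed.

Lemma S6 i : a <= i -> i <= d -> f i = i + (e.+1 - a).
Proof.
ctx.
move=> H1; elim: i H1 => [|i IH] H1 H2.
  have E : a = 0 by lia. by rewrite -E S5; lia.
case: (leqP a i) => H3.
  rewrite S4 // IH //; lia.
have E : a = i.+1 by lia. by rewrite -E S5; lia.
Qed.

Lemma S7 j : d < j -> j.+1 < m -> f j.+1 <= e -> f j.+1 = (f j).+1.
Proof.
ctx.
move=> H1 H2 H3.
have Hi := fI (i := j) (j := j.+1) (ltnSn j) H2 ltac:(lia).
pose w := (f j.+1).-1; have Hwdef : w = (f j.+1).-1 by [].
have Hw : w < m by have := fB H2; rewrite /w; lia.
have Hfw : f (g w) = w := fg Hw.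
case: (leqP (g w) d) => Hp.
- have E := fix1h (i := g w) (gB Hw) Hp ltac:(rewrite Hfw /w; lia).
  rewrite Hfw in E.
  case: (ltngtP (f j) w) => H4.
  + have := gI (i := f j) (j := w) H4 Hw ltac:(rewrite /w; lia).
    rewrite gf; last lia. lia.
  + rewrite /w in H4; lia.
  + have := gf (i := j) ltac:(lia); rewrite H4; lia.
- case: (leqP (g w) j) => Hpj.
  + have := monoh fI (i := g w) (j := j) Hpj ltac:(lia) ltac:(lia).
    rewrite Hfw /w; lia.
  + have := monoh fI (i := j.+1) (j := g w) Hpj (gB Hw) ltac:(lia).
    rewrite Hfw /w; lia.
Qed.

Lemma S8 j : d < j -> j < m -> f j <= e -> f j = a + (j - d.+1).
Proof.
ctx.
elim: j => [|j IH] H1 H2 H3; first lia.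
case: (ltngtP d j) => H4.
- rewrite S7 //; try lia.
  have := fI (i := j) (j := j.+1) (ltnSn j) H2 ltac:(lia).
  move=> H5. rewrite IH //; lia.
- lia.
- rewrite -H4 /a; lia.
Qed.

Lemma S9 : d + (e.+1 - a) < m /\ f (d + (e.+1 - a)) = e.
Proof.
ctx.
set p := g e.
have Hp : p < m := gB (ltac:(lia) : e < m).
have Hfp : f p = e by rewrite /p fg //; lia.
case: (ltnP p a) => Hpa.
  have := S2h Hpa; rewrite Hfp; lia.
case: (leqP p d) => Hpd.
  have := S3 Hpa Hpd; rewrite Hfp; lia.
have := S8 Hpd Hp ltac:(lia). rewrite Hfp => E.
have -> : d + (e.+1 - a) = p by lia.
by split.
Qed.

Lemma charP i : i < m -> f i = Pn a (d.+1 - a) (e.+1 - a) i.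
Proof.
ctx.
move=> Hi; rewrite /Pn.
case: (ltnP i a) => H1; first exact: S2h H1.
case: (ltnP i (a + (d.+1 - a))) => H2; first by rewrite S6 //; lia.
have [H9m H9] := S9.
case: (ltnP i (a + (d.+1 - a) + (e.+1 - a))) => H3.
  have := monoh fI (i := i) (j := d + (e.+1 - a)) ltac:(lia) H9m ltac:(lia).
  rewrite H9 => H4.
  rewrite S8 //; lia.
case: (leqP (f i) e) => H4.
  have := S8 (j := i) ltac:(lia) Hi H4; lia.
apply: (fix2h Hi) => //; lia.
Qed.

Lemma char_par : 0 < d.+1 - a /\ 0 < e.+1 - a /\ a + (d.+1 - a) + (e.+1 - a) <= m.
Proof. have [H _] := S9; lia. Qed.

End Main.


Ltac pn := rewrite /Pn; repeat (case: ifP => ?); lia.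

Section PnNat.
Variables (M a b c : nat).
Hypotheses (Hb : 0 < b) (Hc : 0 < c) (Habc : a + b + c <= M).

Lemma Pn_lt i : i < M -> Pn a b c i < M.
Proof. move=> H; pn. Qed.
Lemma Pn_invol i : Pn a c b (Pn a b c i) = i.
Proof. rewrite {2}/Pn; repeat (case: ifP => ?); pn. Qed.
Lemma Pn_inj i j : Pn a b c i = Pn a b c j -> i = j.
Proof. by move=> E; rewrite -(Pn_invol i) E Pn_invol. Qed.
Lemma Pn_desc i : Pn a b c i.+1 < Pn a b c i -> i.+1 = a + b.
Proof. pn. Qed.
End PnNat.

Section Perm.
Variable n : nat.
Local Notation M := n.+1.

Definition valid (a b c : nat) := [&& 0 < b, 0 < c & a + b + c <= M].

Definition Qn (a b c i : nat) := if valid a b c then Pn a b c i else i.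

Lemma Qn_lt a b c i : i < M -> Qn a b c i < M.
Proof. rewrite /Qn /valid; case: ifP => // /and3P [? ? ?] H; exact: Pn_lt. Qed.

Lemma Qn_inj a b c i j : Qn a b c i = Qn a b c j -> i = j.
Proof. rewrite /Qn /valid; case: ifP => // /and3P [? ? ?]; exact: Pn_inj. Qed.

Definition Pf a b c (i : 'I_M) : 'I_M := inord (Qn a b c i).

Lemma Pf_inj a b c : injective (Pf a b c).
Proof.
move=> i j E; have := congr1 (@nat_of_ord _) E; rewrite /Pf !inordK ?Qn_lt // => /Qn_inj {}E.
exact: val_inj.
Qed.

Definition Pperm a b c : 'S_M := perm (@Pf_inj a b c).

Lemma PpermE a b c i : nat_of_ord (Pperm a b c i) = Qn a b c i.
Proof. by rewrite permE /Pf inordK // Qn_lt. Qed.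

Lemma PpermE' a b c i : valid a b c -> nat_of_ord (Pperm a b c i) = Pn a b c i.
Proof. by move=> H; rewrite PpermE /Qn H. Qed.

Lemma validC a b c : valid a b c -> valid a c b.
Proof. rewrite /valid; move=> /and3P [? ? ?]; apply/and3P; split => //; lia. Qed.

Lemma Pperm_inv a b c : valid a b c -> (Pperm a b c)^-1%g = Pperm a c b.
Proof.
move=> V; apply/permP => i; apply: (perm_inj (s := Pperm a b c)).
rewrite permKV; apply: ord_inj.
rewrite (PpermE' _ V) (PpermE' _ (validC V)).
move: V; rewrite /valid => /and3P [? ? ?].
by rewrite (@Pn_invol n.+1 a c b) //; lia.
Qed.

Lemma is_descentE (s : 'S_M) (i : 'I_M) :
  is_descent s i = (i.+1 < M) && (nat_of_ord (s (inord i.+1)) < s i).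
Proof.
apply/existsP/andP.
- case=> j /andP [/eqP Ej Hj]; split; first by rewrite -Ej ltn_ord.
  by have -> : inord i.+1 = j by apply: ord_inj; rewrite inordK -Ej ?ltn_ord.
- case=> H1 H2; exists (inord i.+1); rewrite H2 andbT inordK //.
Qed.

Lemma Pperm_grass a b c : valid a b c -> grassmannian (Pperm a b c).
Proof.
move=> V; rewrite /grassmannian /ndescents.
apply: (@leq_trans #|[set (inord (a + b).-1 : 'I_M)]|); last by rewrite cards1.
apply: subset_leq_card; apply/subsetP => i; rewrite !inE is_descentE.
case/andP => H1; rewrite !PpermE' // inordK // => H2.
move: V; rewrite /valid => /and3P [? ? ?].
have := (@Pn_desc n.+1 a b c ltac:(lia) ltac:(lia) ltac:(lia) i H2); move=> E; apply/eqP; apply: ord_inj; rewrite inordK; lia.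
Qed.

Lemma Pperm_bigr a b c : valid a b c -> bigrassmannian (Pperm a b c).
Proof.
move=> V; rewrite /bigrassmannian Pperm_grass // Pperm_inv // Pperm_grass //.
exact: validC.
Qed.

End Perm.

Section Perm2.
Variable n : nat.
Local Notation M := n.+1.

Lemma card_int lo hi : hi <= M -> #|[set i : 'I_M | lo <= i < hi]| = hi - lo.
Proof.
move=> H.
have inj : injective (fun x : 'I_(hi - lo) => (inord (lo + x) : 'I_M)).
  move=> x y E; have Hx := ltn_ord x; have Hy := ltn_ord y.
  have := congr1 (@nat_of_ord _) E; rewrite !inordK; try lia.
  by move=> E2; apply: ord_inj; lia.
rewrite -(card_ord (hi - lo)) -(card_imset _ inj).
apply: eq_card => i; rewrite inE; apply/idP/imsetP.
- move=> /andP [H1 H2]; have Hx : i - lo < hi - lo by lia.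
  exists (Ordinal Hx) => //; apply: ord_inj => /=.
  rewrite !inordK; lia.
- case=> x _ ->; have Hx := ltn_ord x; rewrite inordK; lia.
Qed.

Lemma card_intC lo hi : lo <= hi -> hi <= M -> #|~: [set i : 'I_M | lo <= i < hi]| = M - (hi - lo).
Proof. move=> H1 H2; have := cardsC [set i : 'I_M | lo <= i < hi]; rewrite card_int // card_ord; lia. Qed.

Variables (a b c : nat).
Hypothesis V : valid n a b c.
Let Hb0 : 0 < b. Proof. by case/and3P: V. Qed.
Let Hc0 : 0 < c. Proof. by case/and3P: V. Qed.
Let Habc0 : a + b + c <= M. Proof. by case/and3P: V. Qed.

Lemma ninvP : ninv (Pperm n a b c) = b * c.
Proof.
have Hb := Hb0; have Hc := Hc0; have Habc := Habc0.
have -> : b * c = ((a + b) - a) * ((a + b + c) - (a + b)) by lia.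
rewrite /ninv -(@card_int a (a + b)); last lia.
rewrite -(@card_int (a + b) (a + b + c)); last lia.
rewrite -cardsX; apply: eq_card => -[i j]; rewrite !inE /= !PpermE' //.
apply/idP/idP.
- move/andP => [H1 H2]; move: H1 H2; pn.
- move/andP => [/andP [H1 H2] /andP [H3 H4]]; apply/andP; split; first lia. pn.
Qed.

Lemma containsP k : contains_id k (Pperm n a b c) = (k <= M - b) || (k <= M - c).
Proof.
have Hb := Hb0; have Hc := Hc0; have Habc := Habc0.
apply/idP/idP.
- case/existsP => f /forallP Hf.
  have Hf2 : forall i j : 'I_k, i < j -> (f i < f j) && (Pperm n a b c (f i) < Pperm n a b c (f j)).
    by move=> i j Hij; have := Hf i => /forallP /(_ j) /implyP; apply.
  have finj : injective f.
    move=> i j E; case: (ltngtP i j) => H.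
    + have := Hf2 _ _ H; rewrite E ltnn //.
    + have := Hf2 _ _ H; rewrite E ltnn //.
    + exact: ord_inj.
  have key : forall i j, a <= f i < a + b -> a + b <= f j < a + b + c -> False.
    move=> i j HB HC; case: (ltngtP i j) => H.
    + have := Hf2 _ _ H; rewrite !PpermE' //; move: HB HC; pn.
    + have := Hf2 _ _ H; move/andP => [H1 _]; lia.
    + have E : i = j by apply: ord_inj. rewrite E in HB; lia.
  have cardI : #|[set f i | i in 'I_k]| = k by rewrite card_imset // card_ord.
  case: (boolP [exists i, a <= f i < a + b]) => HB.
  + case/existsP: HB => i0 Hi0.
    apply/orP; right; rewrite -cardI.
    have -> : M - c = M - ((a + b + c) - (a + b)) by lia.
    rewrite -(@card_intC (a + b) (a + b + c)); try lia.
    apply: subset_leq_card; apply/subsetP => x /imsetP [i _ ->].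
    rewrite !inE; apply/negP => HC; exact: (key _ _ Hi0 HC).
  + apply/orP; left; rewrite -cardI.
    have -> : M - b = M - ((a + b) - a) by lia.
    rewrite -(@card_intC a (a + b)); try lia.
    apply: subset_leq_card; apply/subsetP => x /imsetP [i _ ->].
    rewrite !inE; apply/negP => HB2; move/negP: HB; apply; apply/existsP; exists i; exact: HB2.
- case/orP => Hk; apply/existsP.
  + exists [ffun i : 'I_k => (inord (if i < a then (i : nat) else i + b) : 'I_M)].
    apply/forallP => i; apply/forallP => j; apply/implyP => Hij.
    have Hi := ltn_ord i; have Hj := ltn_ord j.
    rewrite !ffunE !PpermE' // !inordK; try (case: ifP; lia). pn.
  + exists [ffun i : 'I_k => (inord (if i < a + b then (i : nat) else i + c) : 'I_M)].
    apply/forallP => i; apply/forallP => j; apply/implyP => Hij.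
    have Hi := ltn_ord i; have Hj := ltn_ord j.
    rewrite !ffunE !PpermE' // !inordK; try (case: ifP; lia). pn.
Qed.

End Perm2.


Lemma chain (h : nat -> nat) lo hi :
  (forall k, lo <= k -> k < hi -> h k < h k.+1) ->
  forall d i, lo <= i -> i + d <= hi -> h i + d <= h (i + d).
Proof.
move=> H; elim=> [|d IH] i H1 H2; first by rewrite !addn0.
have := IH i H1 ltac:(lia); have := H (i + d) ltac:(lia) ltac:(lia).
rewrite !addnS; lia.
Qed.

Lemma chain2 (h : nat -> nat) lo hi :
  (forall k, lo <= k -> k < hi -> h k < h k.+1) ->
  forall i j, lo <= i -> i < j -> j <= hi -> h i < h j.
Proof.
move=> H i j H1 H2 H3; have := @chain h lo hi H (j - i) i H1 ltac:(lia).
rewrite subnKC; lia.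
Qed.

Section Grass.
Variable n : nat.
Local Notation M := n.+1.
Variable t : 'S_M.
Let h i := nat_of_ord (t (inord i)).

Lemma hB i : h i < M. Proof. exact: ltn_ord. Qed.

Lemma hinj i j : i < M -> j < M -> h i = h j -> i = j.
Proof.
move=> Hi Hj E; have : t (inord i) = t (inord j) by apply: ord_inj.
move/perm_inj => /(congr1 (@nat_of_ord _)); rewrite !inordK //.
Qed.

Lemma descE i : i < M -> is_descent t (inord i) = (i.+1 < M) && (h i.+1 < h i).
Proof. by move=> Hi; rewrite is_descentE inordK. Qed.

Lemma step i : i.+1 < M -> ~~ is_descent t (inord i) -> h i < h i.+1.
Proof.
move=> Hi; rewrite descE; last lia. rewrite Hi /= -leqNgt leq_eqVlt => /orP [/eqP E|//].
have := hinj (i := i.+1) (j := i) Hi ltac:(lia) (esym E); lia.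
Qed.

Lemma grass_struct : grassmannian t -> t != 1%g ->
  exists d, (d.+1 < M /\ h d.+1 < h d) /\
    forall i j, i < j -> j < M -> (j <= d) || (d < i) -> h i < h j.
Proof.
move=> Hg Ht.
case: (boolP [exists i : 'I_M, is_descent t i]) => Hex.
- case/existsP: Hex => d0 Hd0.
  have Hd0' : is_descent t (inord d0) by rewrite inord_val.
  rewrite descE // in Hd0'; case/andP: Hd0' => Hd1 Hd2.
  exists d0; split => //.
  have uniq : forall k, k.+1 < M -> k != d0 -> h k < h k.+1.
    move=> k Hk Hkd; apply: step => //; apply/negP => Hdk.
    move: Hg; rewrite /grassmannian /ndescents => /card_le1_eqP /(_ (inord k) d0).
    rewrite !inE Hdk Hd0 => /(_ isT isT) E.
    move/eqP: Hkd; apply; rewrite E inordK //; lia.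
  move=> i j Hij Hj /orP [Hj2|Hi2].
  + apply: (chain2 (lo := i) (hi := j)) => // k H1 H2; apply: uniq; lia.
  + apply: (chain2 (lo := i) (hi := j)) => // k H1 H2; apply: uniq; lia.
- exfalso; move/negP: Ht; apply; apply/eqP/permP => x; rewrite perm1.
  have st : forall k, 0 <= k -> k < n -> h k < h k.+1.
    move=> k _ Hk; apply: step; first lia.
    by apply/negP => Hd; move/negP: Hex; apply; apply/existsP; exists (inord k).
  have H1 := @chain h 0 n st x 0 (leqnn 0) ltac:(have := ltn_ord x; lia).
  have H2 := @chain h 0 n st (n - x) x (leq0n x) ltac:(have := ltn_ord x; lia).
  have := hB n; have Hx := ltn_ord x.
  rewrite add0n in H1; rewrite subnKC in H2; last lia.
  move=> H3; apply: ord_inj; have : h x = x by lia.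
  by rewrite /h inord_val.
Qed.

End Grass.

Section CharPerm.
Variable n : nat.
Local Notation M := n.+1.

Lemma char_perm (s : 'S_M) : bigrassmannian s -> s != 1%g ->
  exists a b c, valid n a b c /\ s = Pperm n a b c.
Proof.
case/andP => Hs Hsi Hne.
have Hnei : (s^-1)%g != 1%g by apply: contra Hne => /eqP E; rewrite -(invgK s) E invg1.
have [d [fD fI]] := grass_struct Hs Hne.
have [e [gD gI]] := grass_struct Hsi Hnei.
set f := fun i => nat_of_ord (s (inord i)) in fD fI.
set g := fun i => nat_of_ord ((s^-1)%g (inord i)) in gD gI.
have fB : forall i, i < M -> f i < M by move=> i _; exact: ltn_ord.
have gB : forall i, i < M -> g i < M by move=> i _; exact: ltn_ord.
have fg : forall v, v < M -> f (g v) = v.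
  by move=> v Hv; rewrite /f /g inord_val permKV inordK.
have gf : forall v, v < M -> g (f v) = v.
  by move=> v Hv; rewrite /f /g inord_val permK inordK.
have [P1 [P2 P3]] := char_par fB gB fg gf fI gI fD gD.
exists (f d.+1), (d.+1 - f d.+1), (e.+1 - f d.+1).
have V : valid n (f d.+1) (d.+1 - f d.+1) (e.+1 - f d.+1) by apply/and3P.
split => //.
apply/permP => x; apply: ord_inj; rewrite PpermE' //.
have := charP fB gB fg gf fI gI fD gD (ltn_ord x).
by rewrite /f inord_val.
Qed.

End CharPerm.


Section Count.
Variable n : nat.
Local Notation M := n.+1.

Lemma sum_eq (X x : nat) : x < M -> \sum_(a < M) (a + X == x) = (X <= x).
Proof.
move=> Hx; case: (leqP X x) => H.
- rewrite (bigD1 (inord (x - X))) //= inordK; last lia.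
  rewrite big1; first by rewrite (_ : x - X + X == x) //; apply/eqP; lia.
  move=> i Hi; apply/eqP; rewrite eqb0; apply/negP => /eqP E.
  move/negP: Hi; apply; apply/eqP/ord_inj; rewrite inordK; lia.
- rewrite big1 // => i _; apply/eqP; rewrite eqb0; apply/negP => /eqP E; lia.
Qed.

Lemma sum_le (y : nat) : y < M -> \sum_(b < M) (b <= y) = y.+1.
Proof.
elim: y => [|y IH] Hy.
- have E := @sum_eq 0 0 (ltn0Sn n); rewrite /= in E; rewrite -E.
  apply: eq_bigr => i _; congr nat_of_bool; lia.
- have -> : \sum_(b < M) (b <= y.+1) = \sum_(b < M) (b <= y) + \sum_(b < M) (b + 0 == y.+1).
    rewrite -big_split; apply: eq_bigr => i _ /=.
    case: (ltngtP i y.+1) => H; try lia.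
  rewrite IH; last lia. rewrite sum_eq //; lia.
Qed.

Definition J y := \sum_(b < M) \sum_(c < M) (b + c <= y).

Lemma J_val y : y < M -> (J y).*2 = y.+1 * y.+2.
Proof.
elim: y => [|y IH] Hy.
- rewrite (_ : J 0 = 1) // /J; transitivity (\sum_(b < M) (b + 0 == 0)); last by rewrite sum_eq.
  apply: eq_bigr => b _; transitivity (nat_of_bool (b <= 0)); last by congr nat_of_bool; lia.
  rewrite -(@sum_eq b 0) //; apply: eq_bigr => c _; congr nat_of_bool; lia.
- have -> : J y.+1 = J y + \sum_(b < M) (b <= y.+1).
    rewrite /J -big_split; apply: eq_bigr => b _ /=.
    rewrite -(sum_eq b (x := y.+1)) // -big_split; apply: eq_bigr => c _ /=.
    case: (ltngtP (b + c) y.+1) => H; case: (ltngtP b y.+1) => H'; lia.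
  rewrite sum_le //.
  have := IH ltac:(lia); lia.
Qed.

Definition V x := \sum_(a < M) \sum_(b < M) \sum_(c < M) (a + 2 * b + 2 * c <= x).

Lemma V_step x : x.+1 < M -> V x.+1 = V x + J (x.+1)./2.
Proof.
move=> Hx.
have -> : J (x.+1)./2 = \sum_(a < M) \sum_(b < M) \sum_(c < M) (a + 2 * b + 2 * c == x.+1).
  rewrite exchange_big /J; apply: eq_bigr => b _.
  rewrite exchange_big; apply: eq_bigr => c _.
  rewrite (_ : \sum_(a < M) (a + 2 * b + 2 * c == x.+1) = \sum_(a < M) (a + (2 * b + 2 * c) == x.+1)).
    rewrite sum_eq //; congr nat_of_bool; lia.
  by apply: eq_bigr => a _; rewrite !addnA.
rewrite /V -big_split; apply: eq_bigr => a _.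
rewrite -big_split; apply: eq_bigr => b _.
rewrite -big_split; apply: eq_bigr => c _ /=.
case: (ltngtP (a + 2 * b + 2 * c) x.+1) => H; lia.
Qed.

Lemma V0 : V 0 = 1.
Proof.
rewrite /V; transitivity (\sum_(a < M) (a + 0 == 0)); last by rewrite sum_eq.
apply: eq_bigr => a _.
transitivity (nat_of_bool (a <= 0)); last by congr nat_of_bool; lia.
rewrite -(@sum_eq a 0) //; apply: eq_bigr => b _.
transitivity (nat_of_bool (a + b <= 0)); last by congr nat_of_bool; lia.
rewrite -(@sum_eq (a + b) 0) //; apply: eq_bigr => c _; congr nat_of_bool; lia.
Qed.

Lemma V_val x : x < M ->
  V x * 24 = if odd x then x.+1 * x.+3 * (x + 5) else x.+2 * x.+3 * x.+4.
Proof.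
elim: x => [|x IH] Hx; first by rewrite V0.
rewrite V_step //.
have H1 := IH ltac:(lia).
have H2 := J_val (y := (x.+1)./2) ltac:(lia).
move: H1 H2; case: (boolP (odd x)) => Ho /=; rewrite ?Ho /=.
- move=> H1 H2.
  have [q Hq] : exists q, x = q.*2.+1 by exists x./2; rewrite -[x in x = _]odd_double_half Ho.
  subst x. have E : uphalf (q.*2.+1) = q.+1 by rewrite /= doubleK. rewrite E in H2 *.
  have Eo : odd (q.*2.+2) = false by rewrite /= odd_double.
  nia.
- move=> H1 H2.
  have [q Hq] : exists q, x = q.*2 by exists x./2; rewrite -[x in x = _]odd_double_half (negbTE Ho).
  subst x. have E : uphalf (q.*2) = q by rewrite uphalf_double. rewrite E in H2 *.
  have Eo : odd (q.*2.+1) = true by rewrite /= odd_double.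
  nia.
Qed.

End Count.



Lemma Pn_param_inj M a b c a' b' c' :
  0 < b -> 0 < c -> a + b + c <= M -> 0 < b' -> 0 < c' -> a' + b' + c' <= M ->
  (forall i, i < M -> Pn a b c i = Pn a' b' c' i) -> [/\ a = a', b = b' & c = c'].
Proof.
move=> H1 H2 H3 H4 H5 H6 E.
have Ea : a = a'.
  case: (ltngtP a a') => Ha //.
  - have := E a ltac:(lia); pn.
  - have := E a' ltac:(lia); pn.
subst a'.
have Ec : c = c' by have := E a ltac:(lia); pn.
subst c'.
split => //.
case: (ltngtP b b') => Hb //.
- have := E (a + b) ltac:(lia); pn.
- have := E (a + b') ltac:(lia); pn.
Qed.

Definition jf (L : nat) := if odd L then L.+2 else L.+1.

Lemma jf_odd L : odd (jf L).
Proof. rewrite /jf; case: ifP => H /=; rewrite ?H //; lia. Qed.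

Lemma jf_gt L b : odd b -> L < b -> exists b', b = jf L + 2 * b'.
Proof.
move=> H1 H2; exists ((b - jf L)./2); rewrite /jf; case: ifP => H; lia.
Qed.

Lemma jf_ge L : L < jf L.
Proof. rewrite /jf; case: ifP; lia. Qed.

Lemma odd_j2 L x : odd (jf L + 2 * x).
Proof. by rewrite oddD oddM /= addbF jf_odd. Qed.

Lemma ninv1 M : ninv (1%g : 'S_M) = 0.
Proof.
rewrite /ninv; apply/eqP; rewrite cards_eq0; apply/eqP/setP => p.
rewrite !inE !perm1; apply/negbTE/negP => /andP [H1 H2]; lia.
Qed.

Lemma card3 M (P : 'I_M -> 'I_M -> 'I_M -> bool) :
  #|[set t : 'I_M * 'I_M * 'I_M | P t.1.1 t.1.2 t.2]| =
  \sum_(a < M) \sum_(b < M) \sum_(c < M) P a b c.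
Proof.
rewrite -sum1_card big_mkcond /=.
rewrite pair_big /=.
rewrite pair_big /=.
by apply: eq_bigr => [[[a b] c]] _; rewrite inE /=; case: (P a b c).
Qed.

Lemma bin3 x : 'C(x.+4, 3) * 6 = x.+4 * x.+3 * x.+2.
Proof.
have H1 := mul_bin_left x.+4 2.
have H2 := mul_bin_left x.+4 1.
rewrite bin1 in H2.
have E1 : x.+4 - 2 = x.+2 by lia.
have E2 : x.+4 - 1 = x.+3 by lia.
rewrite E1 in H1; rewrite E2 in H2.
nia.
Qed.

Lemma a_seq_V n x : x < n.+1 -> a_seq x.+2 = V n x.
Proof.
move=> Hx; have := V_val Hx; rewrite /a_seq /=.
case: (boolP (odd x)) => Ho E.
- have -> : (x.+2 - 1) * (x.+2 + 1) * (x.+2 + 3) = V n x * 24 by rewrite E; lia.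
  by rewrite mulnK.
- have -> : 'C(x.+2 + 2, 3) = V n x * 4.
    have := bin3 x; rewrite (_ : x.+2 + 2 = x.+4) //; last lia. lia.
  by rewrite mulnK.
Qed.

Lemma a01 x : x <= 1 -> a_seq x = 0.
Proof. by case: x => [|[|]]. Qed.

Definition PhiD n j (t : 'I_n.+1 * 'I_n.+1 * 'I_n.+1) := Pperm n t.1.1 (j + 2 * t.1.2) (j + 2 * t.2).
Definition TD n j := [set t : 'I_n.+1 * 'I_n.+1 * 'I_n.+1 | t.1.1 + (j + 2 * t.1.2) + (j + 2 * t.2) <= n.+1].

Theorem theorem5p4 (k m : nat) (hk : 1 <= k) (hm : 1 <= m) :
  #|[set s : 'S_m | [&& bigrassmannian s, odd_perm_inv s & avoids_id k s]]| =
  (if m <= k then a_seq m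
   else if m < 2 * k then
     (if ~~ odd (m - k) then a_seq (2 * k - m) else a_seq (2 * k - m - 2))
   else 0).
Proof.
case: m hm => [//|n] _.
have Hjo := jf_odd (n.+1 - k).
have Hjg := jf_ge (n.+1 - k).
have Hgt := @jf_gt (n.+1 - k).
pose j := jf (n.+1 - k); have Ejd : j = jf (n.+1 - k) by [].
rewrite -/j in Hjo Hjg Hgt; clearbody j.
have VT : forall t, t \in TD n j -> valid n t.1.1 (j + 2 * t.1.2) (j + 2 * t.2).
  move=> t; rewrite inE => H; apply/and3P; split; [lia | lia | exact: H].
have oddj : forall x, odd (j + 2 * x) by move=> x; rewrite oddD oddM /= addbF Hjo.
have ES : [set s : 'S_n.+1 | [&& bigrassmannian s, odd_perm_inv s & avoids_id k s]] = @PhiD n j @: TD n j.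
  apply/setP => s; rewrite inE; apply/idP/imsetP.
  - case/and3P => Hb Ho Ha.
    have Hne : s != 1%g by apply/eqP => E; move: Ho; rewrite E /odd_perm_inv ninv1.
    have [a [b [c [V Es]]]] := char_perm Hb Hne.
    have Vb := V; case/and3P: Vb => Hb0 Hc0 Habc.
    move: Ho Ha; rewrite Es /odd_perm_inv /avoids_id ninvP // containsP // oddM.
    move=> /andP [Ob Oc] /norP [/negP Hb1 /negP Hc1].
    have [b' Eb] := Hgt b Ob ltac:(lia).
    have [c' Ec] := Hgt c Oc ltac:(lia).
    exists (inord a, inord b', inord c').
    + rewrite inE /= !inordK; lia.
    + rewrite /PhiD /= !inordK; try lia. by rewrite -Eb -Ec.
  - case=> t Ht ->; have V := VT t Ht.
    rewrite /PhiD Pperm_bigr //= /odd_perm_inv ninvP // oddM !oddj /= /avoids_id containsP //.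
    rewrite inE in Ht; apply/norP; split; apply/negP; lia.
have CT : #|@PhiD n j @: TD n j| = #|TD n j|.
  apply: card_in_imset => -[[x1 y1] z1] [[x2 y2] z2] H1 H2 E.
  have V1 := VT _ H1; have V2 := VT _ H2.
  have Ei : forall i, i < n.+1 -> Pn x1 (j + 2 * y1) (j + 2 * z1) i = Pn x2 (j + 2 * y2) (j + 2 * z2) i.
    move=> i Hi; have := congr1 (fun s : 'S_n.+1 => nat_of_ord (s (inord i))) E.
    by rewrite /PhiD /= !PpermE' // inordK.
  rewrite !inE /= in H1 H2.
  have [Ea Eb Ec] := @Pn_param_inj n.+1 x1 (j + 2 * y1) (j + 2 * z1) x2 (j + 2 * y2) (j + 2 * z2) ltac:(lia) ltac:(lia) H1 ltac:(lia) ltac:(lia) H2 Ei.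
  have -> : x1 = x2 by apply: ord_inj.
  have -> : y1 = y2 by apply: ord_inj; lia.
  have -> : z1 = z2 by apply: ord_inj; lia.
  by [].
have CT2 : #|TD n j| = if 2 * j <= n.+1 then V n (n.+1 - 2 * j) else 0.
  rewrite /TD (card3 (fun a b c : 'I_n.+1 => a + (j + 2 * b) + (j + 2 * c) <= n.+1)).
  case: leqP => H.
  - rewrite /V; apply: eq_bigr => a _; apply: eq_bigr => b _; apply: eq_bigr => c _.
    congr nat_of_bool; apply/idP/idP => ?; lia.
  - rewrite big1 // => a _; rewrite big1 // => b _; rewrite big1 // => c _.
    case: leqP => // Hc; lia.
rewrite ES CT CT2.
move: Ejd; rewrite /jf; case: (boolP (odd (n.+1 - k))) => Ho Ejd.
- case: (leqP (2 * j) n.+1) => H.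
  + rewrite -a_seq_V; last lia.
    case: (leqP n.+1 k) => H1; first (congr a_seq; lia).
    case: (ltnP n.+1 (2 * k)) => H2; last lia.
    rewrite /=; congr a_seq; lia.
  + case: (leqP n.+1 k) => H1; first (rewrite a01 //; lia).
    case: (ltnP n.+1 (2 * k)) => H2 //.
    rewrite /= a01 //; lia.
- case: (leqP (2 * j) n.+1) => H.
  + rewrite -a_seq_V; last lia.
    case: (leqP n.+1 k) => H1; first (congr a_seq; lia).
    case: (ltnP n.+1 (2 * k)) => H2; last lia.
    rewrite /=; congr a_seq; lia.
  + case: (leqP n.+1 k) => H1; first (rewrite a01 //; lia).
    case: (ltnP n.+1 (2 * k)) => H2 //.
    rewrite /= a01 //; lia.
Qed.
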